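(* Let $\mathfrak{n}$ be a $2$-step nilpotent real Lie algebra whose center $\mathfrak{z}$ has $\dim\mathfrak{z}=2$. Then every complex structure on $\mathfrak{n}$ is $2$-step. In particular, if $\mathfrak{n}'=\mathfrak{z}$ and the first Betti number of $\mathfrak{n}$ satisfies $b_1=\dim\mathfrak{n}-2$, then every complex structure on $\mathfrak{n}$ is $2$-step.
   Context: A complex structure on a real Lie algebra $\mathfrak{g}$ is a linear map $J:\mathfrak{g}\to\mathfrak{g}$ with $J^2=-I$ and $N_J(x,y):=[x,y]+J([Jx,y]+[x,Jy])-[Jx,Jy]=0$ for all $x,y\in\mathfrak{g}$. Given such $J$, define inductively $\mathfrak{a}_0(J)=0$ and $\mathfrak{a}_\ell(J)=\{x\in\mathfrak{g}: [x,\mathfrak{g}]\subset\mathfrak{a}_{\ell-1}(J)\text{ and }[Jx,\mathfrak{g}]\subset\mathfrak{a}_{\ell-1}(J)\}$ for $\ell\ge1$. $J$ is called nilpotent if $\mathfrak{a}_t(J)=\mathfrak{g}$ for some positive integer $t$, and $t$-step if $t$ is the smallest such integer. A Lie algebra $\mathfrak{n}$ is $2$-step nilpotent if it is non-abelian and $\mathfrak{n}'=[\mathfrak{n},\mathfrak{n}]\subset\mathfrak{z}$. The first Betti number is $b_1=\dim\mathfrak{n}-\dim\mathfrak{n}'$. *)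

(* Defs.v *)
From HB Require Import structures.
From mathcomp Require Import all_boot all_order all_algebra.
From mathcomp Require Import reals.
Set Implicit Arguments. Unset Strict Implicit. Unset Printing Implicit Defensive.
Import Order.TTheory GRing.Theory Num.Theory.
Local Open Scope ring_scope.

Section LieDefs.
Variables (R : realType) (V : vectType R).

Definition is_lie_bracket (br : V -> V -> V) : Prop :=
  [/\ (forall (a : R) (x y z : V), br (a *: x + y) z = a *: br x z + br y z),
      (forall (a : R) (x y z : V), br x (a *: y + z) = a *: br x y + br x z),
      (forall x : V, br x x = 0) &
      (forall x y z : V, br x (br y z) + br y (br z x) + br z (br x y) = 0)].

Definition is_center (br : V -> V -> V) (Z : {vspace V}) : Prop :=
  forall x : V, x \in Z <-> (forall y : V, br x y = 0).

Definition is_derived (br : V -> V -> V) (D : {vspace V}) : Prop :=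
  (forall x y : V, br x y \in D) /\
  (forall D' : {vspace V}, (forall x y : V, br x y \in D') -> (D <= D')%VS).

Definition two_step_nilpotent (br : V -> V -> V) : Prop :=
  (exists x y : V, br x y <> 0) /\ (forall x y z : V, br (br x y) z = 0).

Definition complex_structure (br : V -> V -> V) (J : 'End(V)) : Prop :=
  (forall x : V, J (J x) = - x) /\
  (forall x y : V, br x y + J (br (J x) y + br x (J y)) - br (J x) (J y) = 0).

Fixpoint in_a (br : V -> V -> V) (J : 'End(V)) (l : nat) (x : V) : Prop :=
  match l with
  | 0 => x = 0
  | l'.+1 => forall y : V, in_a br J l' (br x y) /\ in_a br J l' (br (J x) y)
  end.

Definition step_nilpotent (br : V -> V -> V) (J : 'End(V)) (t : nat) : Prop :=
  (0 < t)%N /\ (forall x : V, in_a br J t x) /\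
  (forall s : nat, (0 < s)%N -> (s < t)%N -> ~ (forall x : V, in_a br J s x)).

End LieDefs.

(* Main.v *)
Require Import Defs.
From HB Require Import structures.
From mathcomp Require Import all_boot all_order all_algebra.
From mathcomp Require Import reals.
From Stdlib Require Import Classical.
From mathcomp Require Import zify.
Import Order.TTheory GRing.Theory Num.Theory.
Local Open Scope ring_scope.

Section Aux.
Variables (R : realType) (V : vectType R) (br : V -> V -> V).
Hypothesis Hl : is_lie_bracket br.
Hypothesis H2 : two_step_nilpotent br.

Lemma br_x0 x : br x 0 = 0.
Proof.
case: Hl => _ Hr _ _.
have := Hr 1 x 0 0; rewrite scale1r addr0 => /eqP.
by rewrite scale1r -subr_eq0 opprD addrA subrr add0r oppr_eq0 => /eqP.
Qed.

Lemma br_add x y z : br x (y + z) = br x y + br x z.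
Proof. case: Hl => _ Hr _ _. by have := Hr 1 x y z; rewrite !scale1r. Qed.

Lemma br_opp x y : br x (- y) = - br x y.
Proof.
apply/eqP; rewrite -addr_eq0 -br_add addNr br_x0 //.
Qed.

Lemma key (Z : {vspace V}) (J : 'End(V)) :
  is_center br Z -> \dim Z = 2%N -> complex_structure br J ->
  forall z, z \in Z -> J z \in Z.
Proof.
move=> HZ dZ [JJ HN].
have brZ x y : br x y \in Z by apply/HZ => w; case: H2 => _ ->.
have [w [w0 wZ JwZ]] : exists w, [/\ w != 0, w \in Z & J w \in Z].
  case: H2 => [[x0 [y0 Hne]] _].
  set z0 := br x0 y0.
  have z0Z : z0 \in Z := brZ x0 y0.
  have z0c : forall y, br z0 y = 0 by apply/HZ.
  case: (boolP (J z0 \in Z)) => Jz0Z.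
    by exists z0; split => //; apply/eqP.
  have [y1 Hy1] : exists y1, br (J z0) y1 <> 0.
    apply/not_all_ex_not => Hall; move/negP: Jz0Z; apply; exact/HZ.
  pose y := - J y1.
  have Jy : J y = y1 by rewrite /y linearN /= JJ opprK.
  have := HN z0 y; rewrite !z0c add0r addr0 Jy => /eqP; rewrite subr_eq0 => /eqP Hv.
  exists (br (J z0) y1); split.
  - exact/eqP.
  - exact: brZ.
  - by rewrite -Hv JJ memvN brZ.
have Jw0 : J w != 0.
  apply: contraNneq w0 => Hj. have := JJ w. by rewrite Hj linear0 => /eqP; rewrite eq_sym oppr_eq0.
have Hfree : free [:: w; J w].
  rewrite free_cons seq1_free Jw0 andbT span_seq1.
  apply/negP => /vlineP [k Hk].
  have : w = (- k ^+ 2) *: w.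
    have HJ : J w = - k *: w by rewrite {1}Hk linearZ /= JJ scalerN scaleNr.
    by rewrite {1}Hk HJ scalerA mulrN -expr2.
  move/eqP; rewrite -subr_eq0 -{1}[w]scale1r -scalerBl opprK scaler_eq0 (negbTE w0) orbF.
  by rewrite gt_eqF // ltr_pwDl // sqr_ge0.
have SZ : (<<[:: w; J w]>> <= Z)%VS.
  by apply/span_subvP => v; rewrite !in_cons in_nil orbF => /orP[] /eqP ->.
have EZ : <<[:: w; J w]>>%VS = Z.
  apply/eqP; rewrite eqEdim SZ /= dZ (eqP Hfree) //.
move=> z; rewrite -{1}EZ span_cons span_seq1 => /memv_addP [a /vlineP [k ->] [b /vlineP [k' ->] ->]].
rewrite linearD !linearZ /= JJ.
by rewrite memvD ?memvZ ?memvN.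
Qed.

End Aux.

Theorem mainTheorem5 (R : realType) (V : vectType R) (br : V -> V -> V) :
  is_lie_bracket br -> two_step_nilpotent br ->
  (forall Z : {vspace V}, is_center br Z -> \dim Z = 2%N ->
     forall J : 'End(V), complex_structure br J -> step_nilpotent br J 2)
  /\
  (forall Z D : {vspace V}, is_center br Z -> is_derived br D -> D = Z ->
     (\dim {:V} - \dim D = \dim {:V} - 2)%N ->
     forall J : 'End(V), complex_structure br J -> step_nilpotent br J 2).
Proof.
move=> Hl H2.
have P1 : forall Z : {vspace V}, is_center br Z -> \dim Z = 2%N ->
     forall J : 'End(V), complex_structure br J -> step_nilpotent br J 2.
  move=> Z HZ dZ J HJ.
  have brZ x y : br x y \in Z by apply/HZ => w; case: H2 => _ ->.
  split => //; split.
    move=> x y /=; split => y' /=; split.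
    - by case: H2 => _ ->.
    - by move: y'; apply/HZ; apply: (@key R V br H2 Z J HZ dZ HJ); apply: brZ.
    - by case: H2 => _ ->.
    - by move: y'; apply/HZ; apply: (@key R V br H2 Z J HZ dZ HJ); apply: brZ.
  move=> s s0 s2 Hall.
  have E1 : s = 1%N by case: s s0 s2 {Hall} => [|[|]].
  subst s.
  case: H2 => [[x [y Hne]] _].
  by move: Hall => /(_ x) /= /(_ y) [].
split=> // Z D HZ HD DZ Hd J HJ.
apply: (P1 Z HZ _ J HJ); rewrite -DZ.
have DV : (\dim D <= \dim {:V})%N by apply: dimvS; apply: subvf.
suff V2 : (2 <= \dim {:V})%N by lia.
case: H2 => [[x [y Hne]] H2'].
have z0Z : br x y \in Z by apply/HZ => w; apply: H2'.
have Z0 : (0 < \dim Z)%N.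
  rewrite lt0n dimv_eq0; apply/negP => /eqP HZ0.
  by move: z0Z; rewrite HZ0 memv0 => /eqP.
have ZV : (\dim Z < \dim {:V})%N.
  rewrite ltnNge; apply/negP => Hle.
  have /eqP EZ : Z == fullv by rewrite eqEdim subvf Hle.
  have : x \in Z by rewrite EZ memvf.
  by move/HZ => /(_ y).
lia.
Qed.
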